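(* Let $p\in\{3,4,\dots\}$, $a\ge0$, $b>0$ satisfy either ($a>0$ and $b\in[p/2-1,p/2]$) or ($a=0$ and $b\in[p/2-1,p/2)$). Let $l\in\{1,2\}$ and let $h:\mathbb{Z}^+\to\mathbb{R}$ satisfy $h(n)=O(n^{-l})$ as $n\to\infty$. For $y>0$ let $N\sim\mathrm{Poisson}(y/2)$. Then there exists $d\in(0,\infty)$ such that for every $k\in\{1,2,3\}$ and every $y>0$, $$\left|\frac{E[h(N)w_{k-1}(N)\mid y]}{E[w_{k-1}(N)\mid y]}\right|\le\frac{d}{y^l}.$$
   Context: $\mathbb{Z}^+=\{0,1,2,\dots\}$; $g_0(z)=(a+z)^{-b}$; for $n\in\mathbb{Z}^+$ and $k\in\{0,1,2,3\}$, $w_k(n)=\int_0^\infty\frac{g_0(z)(z/2)^{n+p/2+k-1}e^{-z/2}}{2\Gamma(n+p/2)}dz$. $E[\cdot\mid y]$ denotes expectation with $N\sim\mathrm{Poisson}(y/2)$. *)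

(* Defs.v *)
From Stdlib Require Import Reals.
From Coquelicot Require Import Coquelicot.
Open Scope R_scope.

Definition Gamma (s : R) : R :=
  RInt_gen (fun t => Rpower t (s - 1) * exp (- t)) (at_right 0) (Rbar_locally p_infty).

Definition g0 (a b : R) (z : R) : R := Rpower (a + z) (- b).

Definition w (p : nat) (a b : R) (k : nat) (n : nat) : R :=
  RInt_gen (fun z => g0 a b z * Rpower (z / 2) (INR n + INR p / 2 + INR k - 1)
                     * exp (- z / 2) / (2 * Gamma (INR n + INR p / 2)))
           (at_right 0) (Rbar_locally p_infty).

Definition PoisE (y : R) (f : nat -> R) : R :=
  Series (fun n => exp (- (y / 2)) * (y / 2) ^ n / INR (Factorial.fact n) * f n).

(* Main.v *)
Require Import Defs.
From Stdlib Require Import Reals Lra Lia Classical.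
From Coquelicot Require Import Coquelicot.
Open Scope R_scope.


Lemma exRI (f : R -> R) u v :
  (forall x, 0 < x -> continuous f x) -> 0 < u -> 0 < v -> ex_RInt f u v.
Proof.
  intros Hc Hu Hv. apply (@ex_RInt_continuous R_CompleteNormedModule). intros z [H1 H2]. apply Hc.
  eapply Rlt_le_trans; [|exact H1]. apply Rmin_case; assumption.
Qed.

Lemma RInt_mono_int (f : R -> R) u v u' v' :
  (forall x, 0 < x -> 0 <= f x) ->
  (forall x, 0 < x -> continuous f x) ->
  0 < u' -> u' <= u -> u <= v -> v <= v' -> RInt f u v <= RInt f u' v'.
Proof.
  intros Hp Hc H1 H2 H3 H4.
  assert (E1 := RInt_Chasles f u' u v' (exRI f u' u Hc ltac:(lra) ltac:(lra))
              (exRI f u v' Hc ltac:(lra) ltac:(lra))).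
  assert (E2 := RInt_Chasles f u v v' (exRI f u v Hc ltac:(lra) ltac:(lra))
              (exRI f v v' Hc ltac:(lra) ltac:(lra))).
  simpl in E1, E2. unfold plus in E1, E2; simpl in E1, E2.
  assert (0 <= RInt f u' u).
  { apply RInt_ge_0; [lra| apply exRI; auto; lra | intros; apply Hp; lra]. }
  assert (0 <= RInt f v v').
  { apply RInt_ge_0; [lra| apply exRI; auto; lra | intros; apply Hp; lra]. }
  lra.
Qed.

Lemma mono_gen (f : R -> R) (B : R) :
  (forall x, 0 < x -> 0 <= f x) ->
  (forall x, 0 < x -> continuous f x) ->
  (forall u v, 0 < u -> u <= v -> RInt f u v <= B) ->
  exists L, is_RInt_gen f (at_right 0) (Rbar_locally p_infty) L /\
    (forall u v, 0 < u -> u <= v -> RInt f u v <= L) /\ 0 <= L /\ L <= B.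
Proof.
  intros Hp Hc HB.
  set (E := fun r => exists u v, 0 < u /\ u <= v /\ r = RInt f u v).
  assert (Hb : bound E).
  { exists B. intros r (u & v & Hu & Huv & ->). apply HB; auto. }
  assert (Hne : exists r, E r).
  { exists (RInt f 1 1). exists 1, 1. repeat split; lra. }
  destruct (completeness E Hb Hne) as [m [Hub Hlub]].
  exists m. split.
  2:{ split; [intros u v Hu Huv; apply Hub; exists u, v; auto|split].
      - replace 0 with (RInt f 1 1) by (rewrite RInt_point; reflexivity).
        apply Hub. exists 1, 1. repeat split; lra.
      - apply Hlub. intros r (u & v & Hu & Huv & ->). apply HB; auto. }
  intros P [eps HP].
  assert (Hex : exists r, E r /\ m - eps < r).
  { apply NNPP. intro Hn.
    assert (m <= m - eps).
    { apply Hlub. intros r Er. apply Rnot_lt_le. intro Hlt. apply Hn. exists r; auto. }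
    destruct eps as [e He]; simpl in *; lra. }
  destruct Hex as (r & (u0 & v0 & Hu0 & Huv0 & ->) & Hr).
  apply Filter_prod with (fun a => 0 < a < u0) (fun b => v0 < b).
  - exists (mkposreal u0 Hu0). intros y Hy Hy0. simpl in Hy.
    unfold ball in Hy; simpl in Hy; unfold AbsRing_ball, abs, minus, plus, opp in Hy; simpl in Hy.
    apply Rabs_lt_between in Hy. lra.
  - exists v0. auto.
  - intros x y [Hx1 Hx2] Hy. simpl. exists (RInt f x y). split.
    + apply (@RInt_correct R_CompleteNormedModule). apply exRI; auto; lra.
    + apply HP.
      assert (RInt f x y <= m). { apply Hub. exists x, y. repeat split; lra. }
      assert (RInt f u0 v0 <= RInt f x y). { apply RInt_mono_int; auto; lra. }
      unfold ball; simpl; unfold AbsRing_ball, abs, minus, plus, opp; simpl.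
      apply Rabs_lt_between. lra.
Qed.


Lemma exp_le_mono x y : x <= y -> exp x <= exp y.
Proof. intros [H|H]; [left; apply exp_increasing; auto| subst; lra]. Qed.

Lemma ln_le_lin x : 0 < x -> ln x <= x - 1.
Proof.
  intros Hx. rewrite <- (ln_exp (x - 1)). apply ln_le; auto.
  pose proof (exp_ineq1_le (x - 1)). lra.
Qed.

Definition Cst (r : R) : R := exp (r * (-1 - ln (/ (2 * (r + 1))))).

Lemma pow_exp_bound r t : 0 <= r -> 0 < t ->
  Rpower t r * exp (- t) <= Cst r * exp (- t / 2).
Proof.
  intros Hr Ht. unfold Rpower, Cst. rewrite <- !exp_plus. apply exp_le_mono.
  set (lam := / (2 * (r + 1))).
  assert (Hl : 0 < lam) by (unfold lam; apply Rinv_0_lt_compat; lra).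
  assert (H1 := ln_le_lin (lam * t) ltac:(nra)).
  rewrite ln_mult in H1 by lra.
  assert (Hrl : r * lam * t <= t / 2).
  { unfold lam. apply Rmult_le_reg_l with (2 * (r + 1)). lra.
    field_simplify; [|lra]. nra. }
  assert (r * ln t <= r * (lam * t - 1 - ln lam)) by (apply Rmult_le_compat_l; lra).
  nra.
Qed.
Definition q (a be z : R) := Rpower (a + z) (- be).
Definition Fi (c a be s z : R) := q a be z * Rpower (z / c) (s - 1) * exp (- (z / c)).
Definition Ki (c a be s z : R) := q a be z / (a + z) * Rpower (z / c) s * exp (- (z / c)).
Definition Phi (c a be s z : R) := q a be z * Rpower (z / c) s * exp (- (z / c)).

Lemma Rpower_pos x y : 0 < Rpower x y.
Proof. unfold Rpower. apply exp_pos. Qed.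

Lemma Rpower_succ x y : 0 < x -> Rpower x (y + 1) = x * Rpower x y.
Proof. intros Hx. rewrite Rpower_plus, Rpower_1 by auto. ring. Qed.

Lemma q_pos a be z : 0 < q a be z.
Proof. apply Rpower_pos. Qed.

Lemma q_le1 a be z : 0 <= a -> 0 <= be -> 1 <= z -> q a be z <= 1.
Proof.
  intros Ha Hb Hz. unfold q, Rpower. rewrite <- exp_0. apply exp_le_mono.
  assert (0 <= ln (a + z)). { rewrite <- ln_1. apply ln_le; lra. }
  nra.
Qed.

Lemma Fi_pos c a be s z : 0 < Fi c a be s z.
Proof.
  unfold Fi. apply Rmult_lt_0_compat; [apply Rmult_lt_0_compat|].
  apply q_pos. apply Rpower_pos. apply exp_pos.
Qed.

Lemma Fi_tail c a be s z : 0 < c -> 0 <= a -> 0 <= be -> 1 <= s -> 1 <= z ->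
  Fi c a be s z <= Cst (s - 1) * exp (- (z / c) / 2).
Proof.
  intros Hc Ha Hb Hs Hz. unfold Fi. rewrite Rmult_assoc.
  assert (H1 := pow_exp_bound (s - 1) (z / c) ltac:(lra) ltac:(apply Rdiv_lt_0_compat; lra)).
  assert (H2 := q_le1 a be z Ha Hb Hz).
  assert (0 < Rpower (z / c) (s - 1) * exp (- (z / c))).
  { apply Rmult_lt_0_compat. apply Rpower_pos. apply exp_pos. }
  assert (0 < q a be z) by apply q_pos.
  nra.
Qed.

Lemma Phi_tail c a be s z : 0 < c -> 0 <= a -> 0 <= be -> 1 <= s -> 1 <= z ->
  Phi c a be s z <= Cst s * exp (- (z / c) / 2).
Proof.
  intros Hc Ha Hb Hs Hz. unfold Phi. rewrite Rmult_assoc.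
  assert (H1 := pow_exp_bound s (z / c) ltac:(lra) ltac:(apply Rdiv_lt_0_compat; lra)).
  assert (H2 := q_le1 a be z Ha Hb Hz).
  assert (0 < Rpower (z / c) s * exp (- (z / c))).
  { apply Rmult_lt_0_compat. apply Rpower_pos. apply exp_pos. }
  assert (0 < q a be z) by apply q_pos.
  nra.
Qed.

Lemma near0 c a be s : 0 < c -> 0 <= a -> 0 <= be -> 1 <= s ->
  (0 < a \/ (a = 0 /\ be < s)) ->
  exists sg Q, 0 < sg /\ 0 <= Q /\ forall z, 0 < z <= 1 ->
    q a be z * Rpower (z / c) (s - 1) <= Q * Rpower z (sg - 1).
Proof.
  intros Hc Ha Hb Hs [HA | [HA HB]].
  - exists s, (exp (- be * ln a) * exp (- (s - 1) * ln c)). split; [lra|split].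
    { left. apply Rmult_lt_0_compat; apply exp_pos. }
    intros z Hz. unfold q, Rpower. rewrite ln_div by lra.
    rewrite Rmult_minus_distr_l, Rminus_def, exp_plus.
    replace (- ((s - 1) * ln c)) with (- (s - 1) * ln c) by ring.
    assert (exp (- be * ln (a + z)) <= exp (- be * ln a)).
    { apply exp_le_mono. assert (ln a <= ln (a + z)) by (apply ln_le; lra). nra. }
    assert (0 < exp ((s - 1) * ln z)) by apply exp_pos.
    assert (0 < exp (- (s - 1) * ln c)) by apply exp_pos.
    assert (0 < exp (- be * ln (a + z))) by apply exp_pos.
    replace (exp (- be * ln a) * exp (- (s - 1) * ln c) * exp ((s - 1) * ln z))
      with (exp (- be * ln a) * (exp ((s - 1) * ln z) * exp (- (s - 1) * ln c))) by ring.
    apply Rmult_le_compat_r; [|auto]. left; apply Rmult_lt_0_compat; auto.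
  - subst a. exists (s - be), (exp (- (s - 1) * ln c)). split; [lra|split].
    { left. apply exp_pos. }
    intros z Hz. unfold q, Rpower. rewrite ln_div by lra. rewrite Rplus_0_l.
    rewrite <- !exp_plus. apply Req_le. f_equal. ring.
Qed.

Lemma Fi_near0 c a be s sg Q z :
  (forall z, 0 < z <= 1 -> q a be z * Rpower (z / c) (s - 1) <= Q * Rpower z (sg - 1)) ->
  0 < z <= 1 -> 0 < c ->
  Fi c a be s z <= Q * Rpower z (sg - 1).
Proof.
  intros H Hz Hc. unfold Fi. specialize (H z Hz).
  assert (exp (- (z / c)) <= 1).
  { rewrite <- exp_0. apply exp_le_mono. assert (0 < z / c) by (apply Rdiv_lt_0_compat; lra). lra. }
  assert (0 < q a be z * Rpower (z / c) (s - 1)).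
  { apply Rmult_lt_0_compat. apply q_pos. apply Rpower_pos. }
  assert (0 < exp (- (z / c))) by apply exp_pos.
  nra.
Qed.

Lemma Phi_near0 c a be s sg Q z :
  (forall z, 0 < z <= 1 -> q a be z * Rpower (z / c) (s - 1) <= Q * Rpower z (sg - 1)) ->
  0 < z <= 1 -> 0 < c ->
  Phi c a be s z <= Q / c * Rpower z sg.
Proof.
  intros H Hz Hc. unfold Phi. specialize (H z Hz).
  assert (exp (- (z / c)) <= 1).
  { rewrite <- exp_0. apply exp_le_mono. assert (0 < z / c) by (apply Rdiv_lt_0_compat; lra). lra. }
  replace s with ((s - 1) + 1) by ring. replace sg with ((sg - 1) + 1) by ring.
  rewrite !Rpower_succ by (try apply Rdiv_lt_0_compat; lra).
  assert (0 < q a be z * Rpower (z / c) (s - 1)).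
  { apply Rmult_lt_0_compat. apply q_pos. apply Rpower_pos. }
  assert (0 < exp (- (z / c))) by apply exp_pos.
  assert (0 < z / c) by (apply Rdiv_lt_0_compat; lra).
  assert (E1 : q a be z * (z / c * Rpower (z / c) (s - 1)) = z / c * (q a be z * Rpower (z / c) (s - 1))) by ring.
  assert (E2 : Q / c * (z * Rpower z (sg - 1)) = z / c * (Q * Rpower z (sg - 1))) by (field; lra).
  assert (z / c * (q a be z * Rpower (z / c) (s - 1)) <= z / c * (Q * Rpower z (sg - 1))).
  { apply Rmult_le_compat_l; lra. }
  rewrite E1, E2.
  apply Rle_trans with (z / c * (q a be z * Rpower (z / c) (s - 1))); [|auto].
  assert (0 < z / c * (q a be z * Rpower (z / c) (s - 1))) by (apply Rmult_lt_0_compat; lra).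
  rewrite <- (Rmult_1_r (z / c * (q a be z * Rpower (z / c) (s - 1)))) at 2.
  apply Rmult_le_compat_l; lra.
Qed.

Lemma Ki_le c a be s z : 0 < c -> 0 <= a -> 0 < z ->
  0 <= Ki c a be s z <= Fi c a be s z / c.
Proof.
  intros Hc Ha Hz.
  assert (Hzc : 0 < z / c) by (apply Rdiv_lt_0_compat; lra).
  assert (E : Rpower (z / c) s = z / c * Rpower (z / c) (s - 1)).
  { rewrite <- Rpower_succ by auto. f_equal; ring. }
  assert (HA : 0 < Fi c a be s z) by apply Fi_pos.
  assert (E2 : Ki c a be s z = Fi c a be s z * (z / (c * (a + z)))).
  { unfold Ki, Fi. rewrite E. field. lra. }
  rewrite E2. split.
  - apply Rmult_le_pos; [lra|]. left. apply Rdiv_lt_0_compat; nra.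
  - unfold Rdiv at 2. apply Rmult_le_compat_l; [lra|].
    apply Rmult_le_reg_l with (c * (a + z)); [nra|].
    field_simplify; nra.
Qed.

Lemma exd_cont (f : R -> R) x : ex_derive f x -> continuous f x.
Proof. apply (@ex_derive_continuous R_AbsRing R_NormedModule). Qed.

Lemma Fi_cont c a be s z : 0 < c -> 0 <= a -> 0 < z -> continuous (Fi c a be s) z.
Proof.
  intros Hc Ha Hz. apply exd_cont. unfold Fi, q, Rpower. auto_derive.
  repeat split; try lra. apply Rmult_lt_0_compat; [lra| apply Rinv_0_lt_compat; lra].
Qed.

Lemma Ki_cont c a be s z : 0 < c -> 0 <= a -> 0 < z -> continuous (Ki c a be s) z.
Proof.
  intros Hc Ha Hz. apply exd_cont. unfold Ki, q, Rpower. auto_derive.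
  repeat split; try lra. apply Rmult_lt_0_compat; [lra| apply Rinv_0_lt_compat; lra].
Qed.

Lemma int_near0 sg Q u : 0 < sg -> 0 <= Q -> 0 < u <= 1 ->
  RInt (fun z => Q * Rpower z (sg - 1)) u 1 <= Q / sg.
Proof.
  intros Hs HQ Hu.
  assert (H : is_RInt (fun z => Q * Rpower z (sg - 1)) u 1
             (minus (Q * Rpower 1 sg / sg) (Q * Rpower u sg / sg))).
  { apply (@is_RInt_derive R_CompleteNormedModule (fun z => Q * Rpower z sg / sg)).
    - intros x Hx. rewrite Rmin_left in Hx by lra.
      unfold Rpower. auto_derive; [lra|].
      replace (sg * ln x) with ((sg - 1) * ln x + ln x) by ring.
      rewrite exp_plus, exp_ln by lra. field. lra.
    - intros x Hx. rewrite Rmin_left in Hx by lra.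
      apply exd_cont. unfold Rpower. auto_derive. lra. }
  apply (@is_RInt_unique R_CompleteNormedModule) in H. rewrite H. unfold minus, plus, opp; simpl.
  replace (Rpower 1 sg) with 1 by (unfold Rpower; rewrite ln_1, Rmult_0_r, exp_0; reflexivity).
  assert (0 < Rpower u sg) by apply Rpower_pos.
  assert (0 <= Q * Rpower u sg / sg).
  { apply Rmult_le_pos; [apply Rmult_le_pos; lra| left; apply Rinv_0_lt_compat; lra]. }
  unfold Rdiv in *. lra.
Qed.

Lemma int_tail K c v : 0 < c -> 0 <= K -> 1 <= v ->
  RInt (fun z => K * exp (- (z / c) / 2)) 1 v <= 2 * c * K.
Proof.
  intros Hc HK Hv.
  assert (H : is_RInt (fun z => K * exp (- (z / c) / 2)) 1 v
             (minus (- 2 * c * K * exp (- (v / c) / 2)) (- 2 * c * K * exp (- (1 / c) / 2)))).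
  { apply (@is_RInt_derive R_CompleteNormedModule (fun z => - 2 * c * K * exp (- (z / c) / 2))).
    - intros x Hx. auto_derive; [auto|]. unfold Rdiv. field. lra.
    - intros x Hx. apply exd_cont. auto_derive. auto. }
  apply (@is_RInt_unique R_CompleteNormedModule) in H. rewrite H. unfold minus, plus, opp; simpl.
  assert (0 < exp (- (v / c) / 2)) by apply exp_pos.
  assert (exp (- (1 / c) / 2) <= 1).
  { rewrite <- exp_0 at 2. apply exp_le_mono. assert (0 < 1 / c) by (apply Rdiv_lt_0_compat; lra). lra. }
  assert (0 <= c * K) by nra.
  nra.
Qed.

Lemma Fi_partial c a be s : 0 < c -> 0 <= a -> 0 <= be -> 1 <= s ->
  (0 < a \/ (a = 0 /\ be < s)) ->
  exists B, forall u v, 0 < u -> u <= v -> RInt (Fi c a be s) u v <= B.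
Proof.
  intros Hc Ha Hb Hs HA.
  destruct (near0 c a be s Hc Ha Hb Hs HA) as (sg & Q & Hsg & HQ & Hn).
  assert (HK : 0 <= Cst (s - 1)) by (left; apply exp_pos).
  exists (Q / sg + 2 * c * Cst (s - 1)).
  intros u v Hu Huv.
  set (u' := Rmin u 1). set (v' := Rmax v 1).
  assert (Hu' : 0 < u' <= 1) by (unfold u'; split; [apply Rmin_case; lra| apply Rmin_r]).
  assert (Hu'u : u' <= u) by apply Rmin_l.
  assert (Hv' : 1 <= v') by apply Rmax_r.
  assert (Hvv : v <= v') by apply Rmax_l.
  assert (Hpos : forall x, 0 < x -> 0 <= Fi c a be s x) by (intros; left; apply Fi_pos).
  assert (Hcont : forall x, 0 < x -> continuous (Fi c a be s) x) by (intros; apply Fi_cont; auto).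
  apply Rle_trans with (RInt (Fi c a be s) u' v').
  { apply RInt_mono_int; auto; lra. }
  rewrite <- (RInt_Chasles (Fi c a be s) u' 1 v') by (apply exRI; auto; lra).
  unfold plus; simpl.
  apply Rplus_le_compat.
  - apply Rle_trans with (RInt (fun z => Q * Rpower z (sg - 1)) u' 1).
    + apply RInt_le; try lra.
      * apply exRI; auto; lra.
      * apply exRI; [|lra|lra]. intros x Hx. apply exd_cont. unfold Rpower. auto_derive. lra.
      * intros x Hx. apply Fi_near0 with (1 := Hn); lra.
    + apply int_near0; auto.
  - apply Rle_trans with (RInt (fun z => Cst (s - 1) * exp (- (z / c) / 2)) 1 v').
    + apply RInt_le; try lra.
      * apply exRI; auto; lra.
      * apply exRI; [|lra|lra]. intros x Hx. apply exd_cont. auto_derive. auto.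
      * intros x Hx. apply Fi_tail; lra.
    + apply int_tail; auto.
Qed.

Lemma Phi_deriv c a be s z : 0 < c -> 0 <= a -> 0 < z ->
  is_derive (Phi c a be s) z
    (s / c * Fi c a be s z - 1 / c * Fi c a be (s + 1) z - be * Ki c a be s z).
Proof.
  intros Hc Ha Hz.
  assert (Hzc : 0 < z * / c) by (apply Rmult_lt_0_compat; [lra| apply Rinv_0_lt_compat; lra]).
  unfold Phi, Fi, Ki, q, Rpower. auto_derive.
  { repeat split; lra. }
  replace (s + 1 - 1) with s by ring.
  unfold Rdiv.
  assert (Et : exp ((s - 1) * ln (z * / c)) = exp (s * ln (z * / c)) * / (z * / c)).
  { replace (s * ln (z * / c)) with ((s - 1) * ln (z * / c) + ln (z * / c)) by ring.
    rewrite exp_plus, exp_ln by lra. field. lra. }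
  rewrite Et. field. repeat split; lra.
Qed.

Lemma Phi_exd c a be s z : 0 < c -> 0 <= a -> 0 < z -> ex_derive (Phi c a be s) z.
Proof. intros. eexists. apply Phi_deriv; auto. Qed.

Lemma Phi_Derive c a be s z : 0 < c -> 0 <= a -> 0 < z ->
  Derive (Phi c a be s) z =
    s / c * Fi c a be s z - 1 / c * Fi c a be (s + 1) z - be * Ki c a be s z.
Proof. intros. apply is_derive_unique. apply Phi_deriv; auto. Qed.

Lemma Phi_Derive_cont c a be s z : 0 < c -> 0 <= a -> 0 < z ->
  continuous (Derive (Phi c a be s)) z.
Proof.
  intros Hc Ha Hz.
  apply continuous_ext_loc with
    (fun z => s / c * Fi c a be s z - 1 / c * Fi c a be (s + 1) z - be * Ki c a be s z).
  - exists (mkposreal z Hz). intros y Hy. simpl in Hy.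
    unfold ball in Hy; simpl in Hy; unfold AbsRing_ball, abs, minus, plus, opp in Hy; simpl in Hy.
    apply Rabs_lt_between in Hy. symmetry. apply Phi_Derive; auto; lra.
  - apply exd_cont. unfold Fi, Ki, q, Rpower. auto_derive.
    assert (0 < z * / c) by (apply Rmult_lt_0_compat; [lra| apply Rinv_0_lt_compat; lra]).
    repeat split; lra.
Qed.

Lemma Phi_pos c a be s z : 0 < Phi c a be s z.
Proof.
  unfold Phi. apply Rmult_lt_0_compat; [apply Rmult_lt_0_compat|].
  apply q_pos. apply Rpower_pos. apply exp_pos.
Qed.

Lemma Phi_lim0 c a be s : 0 < c -> 0 <= a -> 0 <= be -> 1 <= s ->
  (0 < a \/ (a = 0 /\ be < s)) ->
  filterlim (Phi c a be s) (at_right 0) (locally 0).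
Proof.
  intros Hc Ha Hb Hs HA.
  destruct (near0 c a be s Hc Ha Hb Hs HA) as (sg & Q & Hsg & HQ & Hn).
  intros P [eps HP].
  set (Q' := Q / c).
  assert (HQ' : 0 <= Q') by (unfold Q'; apply Rmult_le_pos; [lra| left; apply Rinv_0_lt_compat; lra]).
  set (e' := eps / (Q' + 1)).
  assert (He' : 0 < e') by (unfold e'; apply Rdiv_lt_0_compat; [apply cond_pos| lra]).
  set (del := Rmin 1 (exp (ln e' / sg))).
  assert (Hdel : 0 < del) by (unfold del; apply Rmin_case; [lra| apply exp_pos]).
  exists (mkposreal del Hdel). intros y Hy Hy0. simpl in Hy.
  unfold ball in Hy; simpl in Hy; unfold AbsRing_ball, abs, minus, plus, opp in Hy; simpl in Hy.
  apply Rabs_lt_between in Hy.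
  apply HP.
  unfold ball; simpl; unfold AbsRing_ball, abs, minus, plus, opp; simpl.
  assert (Hy1 : 0 < y <= 1) by (split; [lra|]; assert (del <= 1) by apply Rmin_l; lra).
  assert (H1 := Phi_near0 c a be s sg Q y Hn Hy1 Hc).
  assert (H2 : Rpower y sg < e').
  { unfold Rpower. rewrite <- (exp_ln e') by auto. apply exp_increasing.
    assert (ln y < ln e' / sg).
    { rewrite <- (ln_exp (ln e' / sg)). apply ln_increasing; [lra|].
      assert (del <= exp (ln e' / sg)) by apply Rmin_r. lra. }
    apply Rmult_lt_reg_r with (/ sg). apply Rinv_0_lt_compat; lra.
    replace (sg * ln y * / sg) with (ln y) by (field; lra). exact H. }
  assert (H3 := Phi_pos c a be s y).
  apply Rabs_lt_between.
  assert (Q' * Rpower y sg <= Q' * e') by (apply Rmult_le_compat_l; lra).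
  assert (Q' * e' < eps).
  { unfold e'. apply Rmult_lt_reg_r with (Q' + 1). lra.
    field_simplify; [|lra]. destruct eps as [e He]; simpl in *. nra. }
  unfold Q' in *. destruct eps; simpl in *; split; lra.
Qed.

Lemma Phi_liminf c a be s : 0 < c -> 0 <= a -> 0 <= be -> 1 <= s ->
  filterlim (Phi c a be s) (Rbar_locally p_infty) (locally 0).
Proof.
  intros Hc Ha Hb Hs.
  intros P [eps HP].
  set (K := Cst s).
  assert (HK : 0 < K) by apply exp_pos.
  set (e' := eps / (K + 1)).
  assert (He' : 0 < e') by (unfold e'; apply Rdiv_lt_0_compat; [apply cond_pos| lra]).
  exists (Rmax 1 (- 2 * c * ln e')). intros y Hy.
  apply HP.
  unfold ball; simpl; unfold AbsRing_ball, abs, minus, plus, opp; simpl.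
  assert (Hy1 : 1 <= y) by (assert (1 <= Rmax 1 (- 2 * c * ln e')) by apply Rmax_l; lra).
  assert (Hy2 : - 2 * c * ln e' < y) by (assert (- 2 * c * ln e' <= Rmax 1 (- 2 * c * ln e')) by apply Rmax_r; lra).
  assert (H1 := Phi_tail c a be s y Hc Ha Hb Hs Hy1).
  assert (H2 : exp (- (y / c) / 2) < e').
  { rewrite <- (exp_ln e') by auto. apply exp_increasing.
    apply Rmult_lt_reg_r with (2 * c). lra.
    replace (- (y / c) / 2 * (2 * c)) with (- y) by (field; lra). lra. }
  assert (H3 := Phi_pos c a be s y).
  apply Rabs_lt_between.
  assert (K * exp (- (y / c) / 2) <= K * e') by (apply Rmult_le_compat_l; lra).
  assert (K * e' < eps).
  { unfold e'. apply Rmult_lt_reg_r with (K + 1). lra.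
    field_simplify; [|lra]. destruct eps as [e He]; simpl in *. nra. }
  unfold K in *. destruct eps; simpl in *; split; lra.
Qed.

Lemma pf_ar : ProperFilter' (at_right 0).
Proof. apply Proper_StrongProper. typeclasses eauto. Qed.
Lemma pf_pi : ProperFilter' (Rbar_locally p_infty).
Proof. apply Proper_StrongProper. typeclasses eauto. Qed.
Existing Instance pf_ar.
Existing Instance pf_pi.

Definition AR := at_right 0.
Definition PI_ := Rbar_locally p_infty.

Lemma prod_pos : filter_prod (at_right 0) (Rbar_locally p_infty)
  (fun ab : R * R => 0 < fst ab /\ 0 < snd ab).
Proof.
  apply Filter_prod with (fun x => 0 < x) (fun y => 0 < y).
  - exists (mkposreal 1 Rlt_0_1). intros; auto.
  - exists 0. auto.
  - intros x y Hx Hy. simpl. auto.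
Qed.

Lemma Lexists c a be s : 0 < c -> 0 <= a -> 0 <= be -> 1 <= s ->
  (0 < a \/ (a = 0 /\ be < s)) ->
  exists L, 0 < L /\ is_RInt_gen (Fi c a be s) (at_right 0) (Rbar_locally p_infty) L /\
    (forall u v, 0 < u -> u <= v -> RInt (Fi c a be s) u v <= L).
Proof.
  intros Hc Ha Hb Hs HA.
  destruct (Fi_partial c a be s Hc Ha Hb Hs HA) as [B HB].
  destruct (mono_gen (Fi c a be s) B) as (L & HL & HLp & _ & _); auto.
  { intros; left; apply Fi_pos. }
  { intros; apply Fi_cont; auto. }
  exists L. split; [|split]; auto.
  apply Rlt_le_trans with (RInt (Fi c a be s) 1 2).
  - apply RInt_gt_0; [lra| intros; apply Fi_pos| intros; apply Fi_cont; auto; lra].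
  - apply HLp; lra.
Qed.

Lemma Lrec c a be s L L' : 0 < c -> 0 <= a -> 0 <= be -> 1 <= s ->
  (0 < a \/ (a = 0 /\ be < s)) ->
  is_RInt_gen (Fi c a be s) (at_right 0) (Rbar_locally p_infty) L ->
  (forall u v, 0 < u -> u <= v -> RInt (Fi c a be s) u v <= L) ->
  is_RInt_gen (Fi c a be (s + 1)) (at_right 0) (Rbar_locally p_infty) L' ->
  (s - be) * L <= L' <= s * L.
Proof.
  intros Hc Ha Hb Hs HA HL HLp HL'.
  destruct (mono_gen (Ki c a be s) (L / c)) as (K & HK & _ & HK0 & HKL).
  { intros x Hx. apply Ki_le; auto; lra. }
  { intros; apply Ki_cont; auto. }
  { intros u v Hu Huv.
    apply Rle_trans with (RInt (fun z => scal (/ c) (Fi c a be s z)) u v).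
    - apply RInt_le; auto.
      + apply exRI; [intros; apply Ki_cont; auto| lra| lra].
      + apply exRI; [|lra|lra]. intros x Hx. apply exd_cont. unfold Fi, q, Rpower, scal; simpl.
        unfold mult; simpl. auto_derive.
        assert (0 < x * / c) by (apply Rmult_lt_0_compat; [lra| apply Rinv_0_lt_compat; lra]).
        repeat split; lra.
      + intros x Hx. unfold scal; simpl; unfold mult; simpl.
        destruct (Ki_le c a be s x Hc Ha ltac:(lra)). unfold Rdiv in *. lra.
    - rewrite (@RInt_scal R_CompleteNormedModule) by (apply exRI; [intros; apply Fi_cont; auto| lra| lra]).
      unfold scal; simpl; unfold mult; simpl.
      assert (RInt (Fi c a be s) u v <= L) by (apply HLp; auto).
      assert (0 < / c) by (apply Rinv_0_lt_compat; lra).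
      unfold Rdiv. nra. }
  assert (HD : is_RInt_gen (Derive (Phi c a be s)) (at_right 0) (Rbar_locally p_infty) (0 - 0)).
  { apply is_RInt_gen_Derive.
    - eapply filter_imp; [|exact prod_pos]. intros [x y] [Hx Hy] t Ht. simpl in *.
      apply Phi_exd; auto. assert (0 < Rmin x y) by (apply Rmin_case; lra). lra.
    - eapply filter_imp; [|exact prod_pos]. intros [x y] [Hx Hy] t Ht. simpl in *.
      apply Phi_Derive_cont; auto. assert (0 < Rmin x y) by (apply Rmin_case; lra). lra.
    - apply Phi_lim0; auto.
    - apply Phi_liminf; auto. }
  set (E := fun z => s / c * Fi c a be s z - 1 / c * Fi c a be (s + 1) z - be * Ki c a be s z).
  assert (HE1 : is_RInt_gen E (at_right 0) (Rbar_locally p_infty) (0 - 0)).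
  { eapply is_RInt_gen_ext; [|exact HD].
    eapply filter_imp; [|exact prod_pos]. intros [x y] [Hx Hy] t Ht. simpl in *.
    apply Phi_Derive; auto. assert (0 < Rmin x y) by (apply Rmin_case; lra). lra. }
  assert (HE2 : is_RInt_gen E (at_right 0) (Rbar_locally p_infty)
                  (minus (minus (scal (s / c) L) (scal (1 / c) L')) (scal be K))).
  { eapply is_RInt_gen_ext; [| apply is_RInt_gen_minus; [apply is_RInt_gen_minus|]];
      [| apply is_RInt_gen_scal; exact HL | apply is_RInt_gen_scal; exact HL'
       | apply is_RInt_gen_scal; exact HK].
    apply filter_forall. intros [x y] t _. unfold E, minus, plus, opp, scal; simpl.
    unfold mult; simpl. ring. }
  apply (@is_RInt_gen_unique R_CompleteNormedModule) in HE1. apply (@is_RInt_gen_unique R_CompleteNormedModule) in HE2.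
  rewrite HE1 in HE2. unfold minus, plus, opp, scal in HE2; simpl in HE2.
  unfold mult in HE2; simpl in HE2.
  assert (Heq : L' = s * L - c * be * K).
  { assert (H3 : s / c * L + - (1 / c * L') + - (be * K) = 0) by lra.
    assert (H4 : c * (s / c * L + - (1 / c * L') + - (be * K)) = 0) by (rewrite H3; ring).
    assert (H5 : c * (s / c * L + - (1 / c * L') + - (be * K)) = s * L - L' - c * be * K)
      by (field; lra).
    lra. }
  assert (0 <= c * K <= L).
  { split. apply Rmult_le_pos; lra.
    assert (E6 : c * (L / c) = L :> R) by (field; lra).
    assert (c * K <= c * (L / c)) by (apply Rmult_le_compat_l; lra). lra. }
  rewrite Heq. split; nra.
  all: first [apply pf_ar | apply pf_pi].
Qed.


Definition pi_ (x : R) (n : nat) : R := exp (- x) * x ^ n / INR (Factorial.fact n).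

Lemma fact_pos' n : 0 < INR (Factorial.fact n).
Proof. apply lt_0_INR. apply Factorial.lt_O_fact. Qed.

Lemma pi_pos x n : 0 < x -> 0 < pi_ x n.
Proof.
  intros Hx. unfold pi_. apply Rdiv_lt_0_compat; [|apply fact_pos'].
  apply Rmult_lt_0_compat; [apply exp_pos| apply pow_lt; auto].
Qed.

Lemma pi_S x n : 0 < x -> pi_ x n / (INR n + 1) = pi_ x (S n) / x.
Proof.
  intros Hx. unfold pi_. rewrite fact_simpl, mult_INR, S_INR. simpl.
  assert (0 < INR (Factorial.fact n)) by apply fact_pos'.
  assert (0 <= INR n) by apply pos_INR.
  field. repeat split; lra.
Qed.

Lemma Series_nonneg a : (forall n, 0 <= a n) -> ex_series a -> 0 <= Series a.
Proof.
  intros H He.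
  assert (Series (fun n => 0 * a n) <= Series a).
  { apply Series_le; auto. intros n. specialize (H n). lra. }
  rewrite Series_scal_l in H0. lra.
Qed.

Lemma ex_series_pi x (f : nat -> R) M : 0 < x ->
  (forall n, Rabs (f n) <= M * 3 ^ n) ->
  ex_series (fun n => pi_ x n * f n).
Proof.
  intros Hx Hf.
  assert (He : ex_series (fun n => / INR (Factorial.fact n) * (3 * x) ^ n)).
  { apply ex_pseries_R. eexists. apply is_exp_Reals. }
  apply (ex_series_le (K := R_AbsRing) (V := R_CompleteNormedModule)) with
    (fun n => (exp (- x) * M) * (/ INR (Factorial.fact n) * (3 * x) ^ n)).
  2:{ apply (ex_series_scal_l (K := R_AbsRing) (V := R_NormedModule)) with (c := exp (- x) * M) in He.
      exact He. }
  intros n. unfold norm; simpl. unfold abs; simpl.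
  rewrite Rabs_mult. rewrite (Rabs_right (pi_ x n)) by (apply Rle_ge; left; apply pi_pos; auto).
  specialize (Hf n).
  assert (0 < pi_ x n) by (apply pi_pos; auto).
  apply Rle_trans with (pi_ x n * (M * 3 ^ n)).
  { apply Rmult_le_compat_l; lra. }
  right. unfold pi_. rewrite Rpow_mult_distr. field.
  apply Rgt_not_eq, fact_pos'.
Qed.

Lemma v_geom (v : nat -> R) : (forall n, 0 < v n) -> (forall n, v (S n) <= 3 * v n) ->
  forall n, Rabs (v n) <= v 0%nat * 3 ^ n.
Proof.
  intros Hp H3 n. rewrite Rabs_right by (apply Rle_ge; left; auto).
  induction n; simpl. lra.
  specialize (H3 n). nra.
Qed.

Lemma shift_le (u : nat -> R) : (forall n, 0 <= u n) -> ex_series u ->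
  ex_series (fun n => u (S n)) /\ Series (fun n => u (S n)) <= Series u.
Proof.
  intros Hp He. split.
  - apply (proj1 (ex_series_incr_1 (K := R_AbsRing) (V := R_NormedModule) u)). exact He.
  - rewrite (Series_incr_1 u He). specialize (Hp 0%nat). lra.
Qed.

Lemma pois_main (v h : nat -> R) (K H : R) (l : nat) (y : R) :
  (forall n, 0 < v n) -> (forall n, v (S n) <= 3 * v n) -> (forall n, v n <= K * v (S n)) ->
  0 <= H -> 0 <= K ->
  (forall n, Rabs (h n) <= H / (INR n + 1) ^ l) -> (l = 1 \/ l = 2)%nat -> 0 < y ->
  Rabs (Series (fun n => pi_ (y / 2) n * (h n * v n)) / Series (fun n => pi_ (y / 2) n * v n))
    <= 8 * H * (K + 1) ^ 2 / y ^ l.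
Proof.
  intros Hv H3 HK HH HK0 Hh Hl Hy.
  set (x := y / 2). assert (Hx : 0 < x) by (unfold x; lra).
  assert (Hgeo := v_geom v Hv H3).
  assert (Hpi : forall n, 0 < pi_ x n) by (intros; apply pi_pos; auto).
  assert (exS : ex_series (fun n => pi_ x n * v n)) by (apply ex_series_pi with (v 0%nat); auto).
  assert (Hhb : forall n, Rabs (h n) <= H).
  { intros n. eapply Rle_trans; [apply Hh|].
    assert (1 <= (INR n + 1) ^ l).
    { apply pow_R1_Rle. assert (0 <= INR n) by apply pos_INR. lra. }
    unfold Rdiv. apply Rle_trans with (H * 1); [|lra].
    apply Rmult_le_compat_l; auto.
    apply Rle_trans with (/ 1); [apply Rinv_le_contravar; lra| rewrite Rinv_1; lra]. }
  assert (Hpv : forall n, 0 <= pi_ x n * v n) by (intros; left; apply Rmult_lt_0_compat; auto).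
  set (S0 := Series (fun n => pi_ x n * v n)).
  assert (HS : 0 < S0).
  { unfold S0. rewrite Series_incr_1 by auto.
    assert (0 < pi_ x 0 * v 0%nat) by (apply Rmult_lt_0_compat; auto).
    assert (0 <= Series (fun k => pi_ x (S k) * v (S k))).
    { apply Series_nonneg. intros; auto.
      apply (proj1 (ex_series_incr_1 (K := R_AbsRing) (V := R_NormedModule) (fun n => pi_ x n * v n))).
      auto. }
    lra. }
  set (g := fun n => pi_ x n * (H / (INR n + 1) ^ l * v n)).
  assert (Hg0 : forall n, 0 <= g n).
  { intros n. unfold g. apply Rmult_le_pos; [left; auto|].
    apply Rmult_le_pos; [|left; auto]. apply Rmult_le_pos; auto.
    left. apply Rinv_0_lt_compat, pow_lt. assert (0 <= INR n) by apply pos_INR. lra. }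
  assert (exg : ex_series g).
  { apply ex_series_pi with (H * v 0%nat); auto. intros n.
    assert (0 < (INR n + 1) ^ l) by (apply pow_lt; assert (0 <= INR n) by apply pos_INR; lra).
    assert (H / (INR n + 1) ^ l <= H).
    { unfold Rdiv. apply Rle_trans with (H * 1); [|lra]. apply Rmult_le_compat_l; auto.
      assert (1 <= (INR n + 1) ^ l).
      { apply pow_R1_Rle. assert (0 <= INR n) by apply pos_INR. lra. }
      apply Rle_trans with (/ 1); [apply Rinv_le_contravar; lra| rewrite Rinv_1; lra]. }
    assert (0 <= H / (INR n + 1) ^ l) by (apply Rmult_le_pos; [auto| left; apply Rinv_0_lt_compat; auto]).
    rewrite Rabs_mult, Rabs_right by lra. specialize (Hgeo n).
    rewrite Rabs_right in Hgeo by (apply Rle_ge; left; auto).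
    assert (0 < v n) by auto. rewrite (Rabs_right (v n)) by lra.
    set (A := H / (INR n + 1) ^ l) in *.
    assert (A * v n <= H * v n) by (apply Rmult_le_compat_r; lra).
    assert (H * v n <= H * (v 0%nat * 3 ^ n)) by (apply Rmult_le_compat_l; lra).
    lra. }
  assert (HA : Rabs (Series (fun n => pi_ x n * (h n * v n))) <= Series g).
  { eapply Rle_trans; [apply Series_Rabs|].
    - apply (ex_series_ext (K := R_AbsRing) (V := R_NormedModule)) with (fun n => pi_ x n * Rabs (h n * v n)).
      { intros n. rewrite (Rabs_mult (pi_ x n)), (Rabs_right (pi_ x n)) by (apply Rle_ge; left; auto). reflexivity. }
      apply ex_series_pi with (H * v 0%nat); auto. intros n.
      rewrite Rabs_Rabsolu, Rabs_mult. specialize (Hgeo n). specialize (Hhb n).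
      assert (0 <= Rabs (v n)) by apply Rabs_pos. assert (0 <= Rabs (h n)) by apply Rabs_pos. nra.
    - apply Series_le; auto. intros n. split; [apply Rabs_pos|].
      unfold g. rewrite !Rabs_mult, Rabs_right by (apply Rle_ge; left; auto).
      apply Rmult_le_compat_l; [left; auto|].
      rewrite (Rabs_right (v n)) by (apply Rle_ge; left; auto).
      apply Rmult_le_compat_r; [left; auto| apply Hh]. }
  assert (HB : Series g <= 8 * H * (K + 1) ^ 2 / y ^ l * S0).
  { destruct Hl as [-> | ->].
    -
      set (u := fun n => pi_ x (S n) * v (S n)).
      destruct (shift_le (fun n => pi_ x n * v n) Hpv exS) as [exu Hu].
      apply Rle_trans with (Series (fun n => (H * K / x) * u n)).
      + apply Series_le.
        * intros n. split; auto. unfold g, u.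
          replace (pi_ x n * (H / (INR n + 1) ^ 1 * v n)) with (H / x * (pi_ x (S n) * v n)).
          2:{ assert (E := pi_S x n Hx). assert (0 <= INR n) by apply pos_INR.
              replace (pi_ x (S n)) with (x * (pi_ x n / (INR n + 1))) by (rewrite E; field; lra).
              simpl. field. lra. }
          replace (H * K / x * (pi_ x (S n) * v (S n))) with (H / x * (pi_ x (S n) * (K * v (S n)))) by (field; lra).
          apply Rmult_le_compat_l. apply Rmult_le_pos; [auto| left; apply Rinv_0_lt_compat; auto].
          apply Rmult_le_compat_l; [left; auto| apply HK].
        * apply (ex_series_scal_l (K := R_AbsRing) (V := R_NormedModule)) with (c := H * K / x) in exu. exact exu.
      + rewrite Series_scal_l. fold S0 in Hu. unfold u.
        assert (0 <= H * K / x) by (apply Rmult_le_pos; [nra| left; apply Rinv_0_lt_compat; auto]).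
        apply Rle_trans with (H * K / x * S0); [apply Rmult_le_compat_l; auto|].
        apply Rmult_le_compat_r; [lra|].
        replace (y ^ 1) with y by ring. unfold x.
        replace (H * K / (y / 2)) with (2 * H * K / y) by (field; lra).
        unfold Rdiv. apply Rmult_le_compat_r; [left; apply Rinv_0_lt_compat; auto|].
        nra.
    -
      set (u := fun n => pi_ x (S (S n)) * v (S (S n))).
      destruct (shift_le (fun n => pi_ x n * v n) Hpv exS) as [exu1 Hu1].
      destruct (shift_le (fun n => pi_ x (S n) * v (S n)) (fun n => Hpv (S n)) exu1) as [exu Hu].
      apply Rle_trans with (Series (fun n => (2 * H * K * K / (x * x)) * u n)).
      + apply Series_le.
        * intros n. split; auto. unfold g, u.
          assert (Hn : 0 <= INR n) by apply pos_INR.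
          assert (E1 : pi_ x n = pi_ x (S (S n)) / (x * x) * ((INR n + 1) * (INR n + 2))).
          { assert (E2 := pi_S x n Hx). assert (E3 := pi_S x (S n) Hx).
            rewrite S_INR in E3.
            apply Rmult_eq_reg_r with (/ ((INR n + 1) * (INR n + 2))).
            2:{ apply Rinv_neq_0_compat. nra. }
            replace (pi_ x n * / ((INR n + 1) * (INR n + 2))) with (pi_ x n / (INR n + 1) / (INR n + 2)) by (field; lra).
            rewrite E2.
            replace (pi_ x (S n) / x / (INR n + 2)) with (pi_ x (S n) / (INR n + 1 + 1) / x) by (field; lra).
            rewrite E3. field. split; [lra| nra]. }
          rewrite E1.
          assert (0 < pi_ x (S (S n))) by auto.
          assert (v n <= K * K * v (S (S n))).
          { assert (HK1 := HK n). assert (HK2 := HK (S n)).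
            assert (K * v (S n) <= K * (K * v (S (S n)))) by (apply Rmult_le_compat_l; auto). nra. }
          replace (pi_ x (S (S n)) / (x * x) * ((INR n + 1) * (INR n + 2)) * (H / (INR n + 1) ^ 2 * v n))
            with (H * pi_ x (S (S n)) / (x * x) * ((INR n + 2) / (INR n + 1)) * v n)
            by (simpl; field; split; lra).
          replace (2 * H * K * K / (x * x) * (pi_ x (S (S n)) * v (S (S n))))
            with (H * pi_ x (S (S n)) / (x * x) * 2 * (K * K * v (S (S n)))) by (field; lra).
          assert (0 <= H * pi_ x (S (S n)) / (x * x)).
          { apply Rmult_le_pos; [nra| left; apply Rinv_0_lt_compat; nra]. }
          rewrite Rmult_assoc. rewrite (Rmult_assoc (H * pi_ x (S (S n)) / (x * x)) 2).
          apply Rmult_le_compat_l; auto.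
          assert ((INR n + 2) / (INR n + 1) <= 2).
          { apply Rmult_le_reg_r with (INR n + 1); [lra|]. field_simplify; lra. }
          assert (0 <= (INR n + 2) / (INR n + 1)) by (apply Rmult_le_pos; [lra| left; apply Rinv_0_lt_compat; lra]).
          assert (0 < v n) by auto.
          apply Rle_trans with (2 * v n). { apply Rmult_le_compat_r; lra. }
          lra.
        * apply (ex_series_scal_l (K := R_AbsRing) (V := R_NormedModule)) with (c := 2 * H * K * K / (x * x)) in exu. exact exu.
      + rewrite Series_scal_l. fold S0 in Hu1. unfold u.
        assert (0 <= 2 * H * K * K / (x * x)) by (apply Rmult_le_pos; [nra| left; apply Rinv_0_lt_compat; nra]).
        apply Rle_trans with (2 * H * K * K / (x * x) * S0); [apply Rmult_le_compat_l; lra|].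
        unfold x. apply Rmult_le_compat_r; [lra|].
        replace (2 * H * K * K / (y / 2 * (y / 2))) with (8 * H * (K * K) / y ^ 2) by (simpl; field; lra).
        unfold Rdiv. apply Rmult_le_compat_r; [left; apply Rinv_0_lt_compat, pow_lt; auto|].
        assert (0 <= H * K) by nra. simpl. nra. }
  unfold Rdiv at 1. rewrite Rabs_mult, Rabs_Rinv by lra. rewrite (Rabs_right S0) by lra.
  fold x S0. 
  apply Rmult_le_reg_r with S0; auto.
  rewrite Rmult_assoc, Rinv_l by lra. rewrite Rmult_1_r. lra.
Qed.

Lemma Fi_Gamma_ext s : filter_prod (at_right 0) (Rbar_locally p_infty)
  (fun ab : R * R => forall x, Rmin (fst ab) (snd ab) < x < Rmax (fst ab) (snd ab) ->
     Fi 1 1 0 s x = Rpower x (s - 1) * exp (- x)).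
Proof.
  eapply filter_imp; [|exact prod_pos]. intros [u v] [Hu Hv] t Ht. simpl in *.
  assert (0 < t) by (assert (0 < Rmin u v) by (apply Rmin_case; lra); lra).
  unfold Fi, q. replace (t / 1) with t by field.
  replace (Rpower (1 + t) (- 0)) with 1 by (unfold Rpower; rewrite Ropp_0, Rmult_0_l, exp_0; reflexivity).
  ring.
Qed.

Lemma Gamma_is s : 1 <= s -> exists L, 0 < L /\ Gamma s = L /\
  is_RInt_gen (Fi 1 1 0 s) (at_right 0) (Rbar_locally p_infty) L /\
  (forall u v, 0 < u -> u <= v -> RInt (Fi 1 1 0 s) u v <= L).
Proof.
  intros Hs.
  destruct (Lexists 1 1 0 s ltac:(lra) ltac:(lra) ltac:(lra) Hs ltac:(left; lra)) as (L & HL0 & HL & HLp).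
  exists L. repeat split; auto.
  unfold Gamma. apply (@is_RInt_gen_unique R_CompleteNormedModule); try typeclasses eauto.
  eapply is_RInt_gen_ext; [apply Fi_Gamma_ext| exact HL].
Qed.

Lemma Gamma_facts s : 1 <= s -> 0 < Gamma s /\ Gamma (s + 1) = s * Gamma s.
Proof.
  intros Hs.
  destruct (Gamma_is s Hs) as (L & HL0 & -> & HL & HLp).
  destruct (Gamma_is (s + 1) ltac:(lra)) as (L' & _ & -> & HL' & _).
  split; auto.
  assert (H := Lrec 1 1 0 s L L' ltac:(lra) ltac:(lra) ltac:(lra) Hs ltac:(left; lra) HL HLp HL').
  lra.
Qed.

Lemma w_is p a b k n : 0 <= a -> 0 <= b -> 1 <= INR n + INR p / 2 + INR k ->
  (0 < a \/ (a = 0 /\ b < INR n + INR p / 2 + INR k)) ->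
  exists J, 0 < J /\
    is_RInt_gen (Fi 2 a b (INR n + INR p / 2 + INR k)) (at_right 0) (Rbar_locally p_infty) J /\
    (forall u v, 0 < u -> u <= v -> RInt (Fi 2 a b (INR n + INR p / 2 + INR k)) u v <= J) /\
    w p a b k n = J / (2 * Gamma (INR n + INR p / 2)).
Proof.
  intros Ha Hb Hs HA.
  destruct (Lexists 2 a b (INR n + INR p / 2 + INR k) ltac:(lra) Ha Hb Hs HA) as (J & HJ0 & HJ & HJp).
  exists J. repeat split; auto.
  replace (J / (2 * Gamma (INR n + INR p / 2))) with (scal (/ (2 * Gamma (INR n + INR p / 2))) J)
    by (unfold scal; simpl; unfold mult; simpl; unfold Rdiv; ring).
  unfold w. apply (@is_RInt_gen_unique R_CompleteNormedModule); try typeclasses eauto.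
  assert (H := is_RInt_gen_scal _ (/ (2 * Gamma (INR n + INR p / 2))) J HJ).
  eapply is_RInt_gen_ext; [| exact H].
  apply filter_forall. intros [u v] t _. unfold Fi, q, g0, scal; simpl. unfold mult; simpl.
  replace (- t / 2) with (- (t / 2)) by field. unfold Rdiv. ring.
Qed.

Lemma w_step p a b k n : (3 <= p)%nat -> (k <= 2)%nat -> 0 <= a -> 0 < b ->
  ((0 < a /\ INR p / 2 - 1 <= b <= INR p / 2) \/ (a = 0 /\ INR p / 2 - 1 <= b < INR p / 2)) ->
  0 < w p a b k n /\ w p a b k (S n) <= 3 * w p a b k n /\
  ((1 <= n)%nat -> w p a b k n <= (1 + INR p / 2) * w p a b k (S n)).
Proof.
  intros Hp Hk Ha Hb Hc.
  assert (HP : 3 <= INR p) by (replace 3 with (INR 3) by (simpl; ring); apply le_INR; auto).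
  assert (HK : INR k <= 2) by (replace 2 with (INR 2) by (simpl; ring); apply le_INR; auto).
  assert (HK0 : 0 <= INR k) by apply pos_INR.
  assert (Hn : 0 <= INR n) by apply pos_INR.
  set (s0 := INR n + INR p / 2).
  set (s := INR n + INR p / 2 + INR k).
  assert (Hbs : b <= INR p / 2) by lra.
  assert (HA : forall m, 0 < a \/ (a = 0 /\ b < INR m + INR p / 2 + INR k)).
  { intros m. assert (0 <= INR m) by apply pos_INR. lra. }
  assert (Hs1 : forall m, 1 <= INR m + INR p / 2 + INR k).
  { intros m. assert (0 <= INR m) by apply pos_INR. lra. }
  destruct (w_is p a b k n Ha ltac:(lra) (Hs1 n) (HA n)) as (J & HJ0 & HJ & HJp & Hw).
  destruct (w_is p a b k (S n) Ha ltac:(lra) (Hs1 (S n)) (HA (S n))) as (J' & HJ0' & HJ' & _ & Hw').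
  rewrite S_INR in HJ', Hw'.
  replace (INR n + 1 + INR p / 2 + INR k) with (s + 1) in HJ' by (unfold s; ring).
  replace (INR n + 1 + INR p / 2) with (s0 + 1) in Hw' by (unfold s0; ring).
  destruct (Gamma_facts s0 ltac:(unfold s0; lra)) as [HG HG1].
  rewrite HG1 in Hw'. fold s0 in Hw.
  assert (HL := Lrec 2 a b s J J' ltac:(lra) Ha ltac:(lra) (Hs1 n) (HA n) HJ HJp HJ').
  set (G := Gamma s0) in *.
  assert (Hs0 : 3 / 2 <= s0) by (unfold s0; lra).
  rewrite Hw, Hw'. split; [|split].
  - apply Rdiv_lt_0_compat; lra.
  - apply Rmult_le_reg_r with (2 * (s0 * G)). nra.
    replace (J' / (2 * (s0 * G)) * (2 * (s0 * G))) with J' by (field; lra).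
    replace (3 * (J / (2 * G)) * (2 * (s0 * G))) with (3 * s0 * J) by (field; lra).
    assert (s <= 3 * s0) by (unfold s, s0 in *; lra). nra.
  - intros H1. assert (Hn1 : 1 <= INR n) by (replace 1 with (INR 1) by reflexivity; apply le_INR; auto).
    apply Rmult_le_reg_r with (2 * (s0 * G)). nra.
    replace (J / (2 * G) * (2 * (s0 * G))) with (s0 * J) by (field; lra).
    replace ((1 + INR p / 2) * (J' / (2 * (s0 * G))) * (2 * (s0 * G))) with ((1 + INR p / 2) * J') by (field; lra).
    assert (INR n * J <= J').
    { assert (INR n <= s - b) by (unfold s; lra). nra. }
    assert (s0 <= (1 + INR p / 2) * INR n) by (unfold s0; nra).
    assert ((1 + INR p / 2) * (INR n * J) <= (1 + INR p / 2) * J') by (apply Rmult_le_compat_l; lra).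
    nra.
Qed.

Lemma w_props p a b k : (3 <= p)%nat -> (k <= 2)%nat -> 0 <= a -> 0 < b ->
  ((0 < a /\ INR p / 2 - 1 <= b <= INR p / 2) \/ (a = 0 /\ INR p / 2 - 1 <= b < INR p / 2)) ->
  exists K, 0 <= K /\ (forall n, 0 < w p a b k n) /\ (forall n, w p a b k (S n) <= 3 * w p a b k n) /\
    (forall n, w p a b k n <= K * w p a b k (S n)).
Proof.
  intros Hp Hk Ha Hb Hc.
  assert (HS := fun n => w_step p a b k n Hp Hk Ha Hb Hc).
  assert (HP : 0 <= INR p / 2) by (assert (0 <= INR p) by apply pos_INR; lra).
  assert (H0 := HS 0%nat). assert (H1 := HS 1%nat).
  exists (1 + INR p / 2 + w p a b k 0%nat / w p a b k 1%nat).
  assert (0 < w p a b k 0%nat / w p a b k 1%nat) by (apply Rdiv_lt_0_compat; lra).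
  split; [lra|split; [intros n; apply (HS n)|split; [intros n; apply (HS n)|]]].
  intros [|n].
  - replace (w p a b k 0%nat) with (w p a b k 0%nat / w p a b k 1%nat * w p a b k 1%nat) at 1 by (field; lra).
    apply Rmult_le_compat_r; lra.
  - destruct (HS (S n)) as (Hp1 & _ & Hl).
    destruct (HS (S (S n))) as (Hp2 & _ & _).
    eapply Rle_trans; [apply Hl; lia|]. apply Rmult_le_compat_r; lra.
Qed.

Fixpoint hmax (f : nat -> R) (m : nat) : R :=
  match m with O => 0 | S m' => Rmax (hmax f m') (f m') end.

Lemma hmax_nonneg f m : 0 <= hmax f m.
Proof. induction m; simpl. lra. eapply Rle_trans; [exact IHm| apply Rmax_l]. Qed.

Lemma hmax_ge f m n : (n < m)%nat -> f n <= hmax f m.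
Proof.
  induction m; intros H. lia. simpl.
  destruct (Nat.eq_dec n m) as [->|Hne]. apply Rmax_r.
  eapply Rle_trans; [apply IHm; lia| apply Rmax_l].
Qed.

Lemma h_bound (h : nat -> R) (l : nat) C M : (l = 1 \/ l = 2)%nat ->
  (forall n, (M <= n)%nat -> Rabs (h n) <= C / (INR n) ^ l) ->
  exists H, 0 <= H /\ forall n, Rabs (h n) <= H / (INR n + 1) ^ l.
Proof.
  intros Hl Hh.
  set (f := fun m => Rabs (h m) * (INR m + 1) ^ l).
  set (M' := Nat.max M 1).
  exists (4 * Rabs C + hmax f M').
  assert (H0 := hmax_nonneg f M'). assert (HC := Rabs_pos C).
  split; [lra|]. intros n.
  assert (Hn : 0 <= INR n) by apply pos_INR.
  assert (Hpos : 0 < (INR n + 1) ^ l) by (apply pow_lt; lra).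
  destruct (Nat.lt_ge_cases n M') as [Hlt|Hge].
  - assert (E : Rabs (h n) = f n / (INR n + 1) ^ l) by (unfold f; field; lra).
    rewrite E. unfold Rdiv. apply Rmult_le_compat_r; [left; apply Rinv_0_lt_compat; auto|].
    assert (f n <= hmax f M') by (apply hmax_ge; auto). lra.
  - assert (Hn1 : 1 <= INR n) by (replace 1 with (INR 1) by reflexivity; apply le_INR; lia).
    assert (Hpn : 0 < INR n ^ l) by (apply pow_lt; lra).
    eapply Rle_trans; [apply Hh; lia|].
    assert (Hq : (INR n + 1) ^ l <= 4 * INR n ^ l) by (destruct Hl as [->| ->]; simpl; nra).
    apply Rle_trans with (Rabs C / INR n ^ l).
    { unfold Rdiv. apply Rmult_le_compat_r; [left; apply Rinv_0_lt_compat; auto| apply Rle_abs]. }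
    apply Rle_trans with (4 * Rabs C / (INR n + 1) ^ l).
    { apply Rmult_le_reg_r with (INR n ^ l * (INR n + 1) ^ l). nra.
      replace (Rabs C / INR n ^ l * (INR n ^ l * (INR n + 1) ^ l)) with (Rabs C * (INR n + 1) ^ l) by (field; lra).
      replace (4 * Rabs C / (INR n + 1) ^ l * (INR n ^ l * (INR n + 1) ^ l)) with (Rabs C * (4 * INR n ^ l)) by (field; lra).
      apply Rmult_le_compat_l; lra. }
    unfold Rdiv. apply Rmult_le_compat_r; [left; apply Rinv_0_lt_compat; auto| lra].
Qed.

Theorem propositionA6 (p : nat) (a b : R) (l : nat) (h : nat -> R) :
  (3 <= p)%nat ->
  0 <= a -> 0 < b ->
  ((0 < a /\ INR p / 2 - 1 <= b <= INR p / 2) \/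
   (a = 0 /\ INR p / 2 - 1 <= b < INR p / 2)) ->
  (l = 1%nat \/ l = 2%nat) ->
  (exists C : R, exists M : nat, forall n : nat, (M <= n)%nat ->
      Rabs (h n) <= C / (INR n) ^ l) ->
  exists d : R, 0 < d /\
    forall (k : nat) (y : R), (1 <= k <= 3)%nat -> 0 < y ->
      Rabs (PoisE y (fun n => h n * w p a b (k - 1) n) / PoisE y (w p a b (k - 1)))
        <= d / y ^ l.
Proof.
  intros Hp Ha Hb Hc Hl [C [M HCM]].
  destruct (h_bound h l C M Hl HCM) as (H & HH & Hh).
  destruct (w_props p a b 0 Hp ltac:(lia) Ha Hb Hc) as (K0 & HK0 & P0 & T0 & Q0).
  destruct (w_props p a b 1 Hp ltac:(lia) Ha Hb Hc) as (K1 & HK1 & P1 & T1 & Q1).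
  destruct (w_props p a b 2 Hp ltac:(lia) Ha Hb Hc) as (K2 & HK2 & P2 & T2 & Q2).
  set (K := K0 + K1 + K2).
  assert (HKn : 0 <= K) by (unfold K; lra).
  assert (HW : forall k', (k' <= 2)%nat ->
    (forall n, 0 < w p a b k' n) /\ (forall n, w p a b k' (S n) <= 3 * w p a b k' n) /\
    (forall n, w p a b k' n <= K * w p a b k' (S n))).
  { intros k' Hk'.
    assert (k' = 0 \/ k' = 1 \/ k' = 2)%nat as [->|[->| ->]] by lia.
    - split; [exact P0| split; [exact T0|]]. intros n. eapply Rle_trans; [apply Q0|].
      apply Rmult_le_compat_r; [left; apply P0| unfold K; lra].
    - split; [exact P1| split; [exact T1|]]. intros n. eapply Rle_trans; [apply Q1|].
      apply Rmult_le_compat_r; [left; apply P1| unfold K; lra].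
    - split; [exact P2| split; [exact T2|]]. intros n. eapply Rle_trans; [apply Q2|].
      apply Rmult_le_compat_r; [left; apply P2| unfold K; lra]. }
  exists (8 * H * (K + 1) ^ 2 + 1). split.
  { assert (0 <= 8 * H * (K + 1) ^ 2) by (apply Rmult_le_pos; [lra| apply pow_le; lra]). lra. }
  intros k y Hk Hy.
  destruct (HW (k - 1)%nat ltac:(lia)) as (Wp & W3 & WK).
  assert (Hm := pois_main (w p a b (k - 1)) h K H l y Wp W3 WK HH HKn Hh Hl Hy).
  unfold pi_ in Hm. unfold PoisE.
  eapply Rle_trans; [exact Hm|].
  unfold Rdiv. apply Rmult_le_compat_r; [left; apply Rinv_0_lt_compat, pow_lt; auto| lra].
Qed.
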